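(* (1) If $L_1,L_2\in\mathbb{L}^{>0}(\mathrm{QBA}|\mathrm{ND})$ (over the same alphabet $\Sigma$), then $L_1\cup L_2\in\mathbb{L}^{>0}(\mathrm{QBA}|\mathrm{ND})$. (2) Let $\lambda\in(0,1)$. If $L_1,L_2\in\mathbb{L}^{>\lambda}(\mathrm{QBA}|\mathrm{ND})$ (over the same alphabet), then there is a sequence of $\omega$-languages $L^{(k)}\in\mathbb{L}^{>\lambda}(\mathrm{QBA}|\mathrm{ND})$, $k\in\mathbb{N}$, with $\lim_{k\to\infty}L^{(k)}=L_1\cup L_2$. (3) For $\lambda\in(0,1)$, $\mathbb{L}^{>\lambda}(\mathrm{QBA}|\mathrm{ND})$ is not closed in the limit: there is a sequence of languages in $\mathbb{L}^{>\lambda}(\mathrm{QBA}|\mathrm{ND})$ whose limit exists and does not belong to $\mathbb{L}^{>\lambda}(\mathrm{QBA}|\mathrm{ND})$. (4) For $\lambda\in[0,1)$, $\mathbb{L}^{>\lambda}(\mathrm{QBA}|\mathrm{ND})$ is not closed under complementation (relative to $\Sigma^\omega$). (5) For $\lambda\in[0,1)$, $\mathbb{L}^{>\lambda}(\mathrm{QBA}|\mathrm{ND})$ is not closed under intersection.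
   Context: A quantum automaton is a tuple $\mathcal{A}=(\mathcal{H},|s_0\rangle,\Sigma,\{U_\sigma:\sigma\in\Sigma\},F)$ where $\mathcal{H}$ is a finite-dimensional complex Hilbert space, $|s_0\rangle$ a unit vector, $\Sigma$ a finite alphabet, each $U_\sigma$ unitary, and $F$ a subspace. For $w=\sigma_1\sigma_2\cdots\in\Sigma^\omega$ the non-disturbing run is $|s_n\rangle=U_{\sigma_n}\cdots U_{\sigma_1}|s_0\rangle$, and $f^{\mathrm{ND}}_{\mathcal{A}}(w)=\sup_{|\psi\rangle}\sup_{\{n_i\}}\inf_{i\ge1}|\langle\psi|s_{n_i}\rangle|^2$ (sup over unit $|\psi\rangle\in F$ and strictly increasing sequences $0\le n_1<n_2<\cdots$). For $\lambda\in[0,1)$, $\mathcal{L}^{>\lambda}(\mathcal{A}|\mathrm{ND})=\{w\in\Sigma^\omega:f^{\mathrm{ND}}_{\mathcal{A}}(w)>\lambda\}$ and $\mathbb{L}^{>\lambda}(\mathrm{QBA}|\mathrm{ND})$ is the class of all such languages as $\mathcal{A}$ ranges over quantum automata. The limit of a sequence of sets $L^{(k)}$ is understood in the set-theoretic sense: $\lim_k L^{(k)}=L$ means $\liminf_k L^{(k)}=\limsup_k L^{(k)}=L$. *)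

(* Defs.v *)
From HB Require Import structures.
From mathcomp Require Import all_boot all_order all_algebra.
From mathcomp Require Import boolp classical_sets reals.
From mathcomp Require Import complex.
Set Implicit Arguments. Unset Strict Implicit. Unset Printing Implicit Defensive.
Import Order.TTheory GRing.Theory Num.Theory.
Local Open Scope ring_scope.
Local Open Scope classical_set_scope.

Section QA.
Variable R : realType.
Local Notation C := (complex.complex R).

Definition sqmod (z : C) : R := (complex.Re z) ^+ 2 + (complex.Im z) ^+ 2.

Definition adjmx m n (A : 'M[C]_(m, n)) : 'M[C]_(n, m) := (map_mx (@complex.conjc R) A)^T.

Definition innerp d (psi s : 'cV[C]_d) : C := (adjmx psi *m s) 0 0.

Definition unit_vec d (v : 'cV[C]_d) : Prop := \sum_(i < d) sqmod (v i 0) = 1.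

Definition unitary d (U : 'M[C]_d) : Prop :=
  adjmx U *m U = 1%:M /\ U *m adjmx U = 1%:M.

(* A quantum automaton over the finite alphabet Sigma.  The Hilbert space is
   C^qa_dim; the subspace F is the row space of qa_F, a column vector psi
   lies in F iff (psi^T <= qa_F)%MS. *)
Record qautomaton (Sigma : finType) := QAutomaton {
  qa_dim : nat;
  qa_init : 'cV[C]_qa_dim;
  qa_U : Sigma -> 'M[C]_qa_dim;
  qa_F : 'M[C]_qa_dim;
  qa_init_unit : unit_vec qa_init;
  qa_U_unitary : forall a, unitary (qa_U a)
}.

Definition in_F Sigma (A : qautomaton Sigma) (psi : 'cV[C]_(qa_dim A)) : bool :=
  (psi^T <= qa_F A)%MS.
Arguments in_F {Sigma} A psi.

(* non-disturbing run: s_0 = init, s_(n+1) = U_(w n) s_n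
   (the word w = sigma_1 sigma_2 ... is w 0, w 1, ...) *)
Fixpoint run Sigma (A : qautomaton Sigma) (w : nat -> Sigma) (n : nat)
  : 'cV[C]_(qa_dim A) :=
  match n with
  | 0 => qa_init A
  | n'.+1 => qa_U A (w n') *m run A w n'
  end.

Definition strictly_increasing (ns : nat -> nat) : Prop :=
  forall i, (ns i < ns i.+1)%N.

Definition fND Sigma (A : qautomaton Sigma) (w : nat -> Sigma) : R :=
  sup [set x : R | exists psi : 'cV[C]_(qa_dim A),
         [/\ unit_vec psi, in_F A psi &
           exists ns : nat -> nat, strictly_increasing ns /\
             x = inf [set y : R | exists i : nat,
                        y = sqmod (innerp psi (run A w (ns i)))]]].

Definition langND Sigma (A : qautomaton Sigma) (lambda : R) : set (nat -> Sigma) :=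
  [set w | lambda < fND A w].

Definition QBA_ND (Sigma : finType) (lambda : R) (L : set (nat -> Sigma)) : Prop :=
  exists A : qautomaton Sigma, L = langND A lambda.

End QA.

Definition set_liminf T (Ls : nat -> set T) : set T :=
  [set x | exists k, forall j, (k <= j)%N -> Ls j x].
Definition set_limsup T (Ls : nat -> set T) : set T :=
  [set x | forall k, exists j, (k <= j)%N /\ Ls j x].
Definition set_lim_is T (Ls : nat -> set T) (L : set T) : Prop :=
  set_liminf Ls = L /\ set_limsup Ls = L.

(* Main.v *)
Require Import Defs.
From HB Require Import structures.
From mathcomp Require Import all_boot all_order all_algebra.
From mathcomp Require Import boolp classical_sets reals.
From mathcomp Require Import all_fingroup.
From mathcomp Require Import complex spectral sesquilinear mxtens.
From mathcomp Require Import ring lra.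
Set Implicit Arguments. Unset Strict Implicit. Unset Printing Implicit Defensive.
Import Order.TTheory GRing.Theory Num.Theory.
Local Open Scope ring_scope.
Local Open Scope classical_set_scope.


Section Basics.
Variable R : realType.
Local Notation C := (complex.complex R).

Lemma conjCE (z : C) : Num.conj z = complex.conjc z.
Proof.
have [->|nz] := eqVneq z 0; first by rewrite conjC0 complex.conjc0.
apply: (mulfI nz); by rewrite -normCK complex.sqr_normc.
Qed.

Lemma sqmodE (z : C) : (sqmod z)%:C%C = `|z| ^+ 2.
Proof. by rewrite /sqmod complex.add_Re2_Im2. Qed.

Lemma sqmod_ge0 (z : C) : 0 <= sqmod z.
Proof. by rewrite /sqmod addr_ge0 // sqr_ge0. Qed.

Lemma sqmodM (x y : C) : sqmod (x * y) = sqmod x * sqmod y.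
Proof. by case: x y => a b [c d]; rewrite /sqmod /=; ring. Qed.
Lemma Re_conjM (x y : C) : complex.Re (x^*%C * y) = complex.Re x * complex.Re y + complex.Im x * complex.Im y.
Proof. by case: x y => a b [c d] /=; ring. Qed.
Lemma Im_conjM (x y : C) : complex.Im (x^*%C * y) = complex.Re x * complex.Im y - complex.Im x * complex.Re y.
Proof. by case: x y => a b [c d] /=; ring. Qed.

Lemma Re_sum I (r : seq I) (P : pred I) (F : I -> C) :
  complex.Re (\sum_(i <- r | P i) F i) = \sum_(i <- r | P i) complex.Re (F i).
Proof. by elim/big_rec2: _ => // i y1 y2 _ <-; case: (F i) y2 => a b [c d]. Qed.
Lemma Im_sum I (r : seq I) (P : pred I) (F : I -> C) :
  complex.Im (\sum_(i <- r | P i) F i) = \sum_(i <- r | P i) complex.Im (F i).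
Proof. by elim/big_rec2: _ => // i y1 y2 _ <-; case: (F i) y2 => a b [c d]. Qed.

Lemma innerpE d (psi s : 'cV[C]_d) :
  innerp psi s = \sum_i (psi i 0)^*%C * s i 0.
Proof. by rewrite /innerp /adjmx !mxE; apply: eq_bigr => i _; rewrite !mxE. Qed.

Definition norm2 d (v : 'cV[C]_d) : R := \sum_i sqmod (v i 0).

Lemma norm2_ge0 d (v : 'cV[C]_d) : 0 <= norm2 v.
Proof. by apply: sumr_ge0 => i _; apply: sqmod_ge0. Qed.

Lemma sqmodJ (z : C) : (sqmod z)%:C%C = z^*%C * z.
Proof. by case: z => a b; rewrite /sqmod /= ; apply/eqP; rewrite complex.eq_complex /=; apply/andP; split; apply/eqP; ring. Qed.

Lemma norm2C d (v : 'cV[C]_d) : (norm2 v)%:C%C = innerp v v.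
Proof.
rewrite innerpE /norm2 rmorph_sum /=; apply: eq_bigr => i _; exact: sqmodJ.
Qed.

Lemma adjmxM m n p (A : 'M[C]_(m, n)) (B : 'M[C]_(n, p)) :
  adjmx (A *m B) = adjmx B *m adjmx A.
Proof. by rewrite /adjmx map_mxM trmx_mul. Qed.

Lemma innerpM d (U : 'M[C]_d) (x y : 'cV[C]_d) :
  adjmx U *m U = 1%:M -> innerp (U *m x) (U *m y) = innerp x y.
Proof. by move=> hU; rewrite /innerp adjmxM -mulmxA (mulmxA (adjmx U)) hU mul1mx. Qed.

Lemma norm2M d (U : 'M[C]_d) (x : 'cV[C]_d) :
  adjmx U *m U = 1%:M -> norm2 (U *m x) = norm2 x.
Proof. by move=> hU; apply: (@complex.complexI R); rewrite !norm2C innerpM. Qed.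

Lemma run_unit (Sigma : finType) (A : qautomaton R Sigma) w n :
  unit_vec (run A w n).
Proof.
elim: n => [|n IH] /=; first exact: qa_init_unit.
have [hU _] := qa_U_unitary A (w n).
by rewrite /unit_vec -[X in X = _]/(norm2 _) norm2M.
Qed.
Lemma dotmx_innerp d (a b : 'cV[C]_d) : dotmx (b^T) (a^T) = innerp a b.
Proof.
rewrite dotmxE innerpE !mxE; apply: eq_bigr => i _; rewrite !mxE conjCE mulrC //.
Qed.

Lemma CS d (a b : 'cV[C]_d) : sqmod (innerp a b) <= norm2 a * norm2 b.
Proof.
have : `|dotmx (b^T) (a^T)| ^+ 2 <= dotmx (b^T) (b^T) * dotmx (a^T) (a^T)
  := (CauchySchwarz (@dotmx C d) (b^T) (a^T)).1.
rewrite !dotmx_innerp -!norm2C -sqmodE -rmorphM /=.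
by rewrite complex.lecR mulrC.
Qed.

Lemma CS_unit d (a b : 'cV[C]_d) : unit_vec a -> unit_vec b -> sqmod (innerp a b) <= 1.
Proof. by move=> ha hb; have := CS a b; rewrite /norm2 ha hb mulr1. Qed.
End Basics.

Definition io (P : nat -> Prop) := forall N, exists n, (N <= n)%N /\ P n.

Lemma strinc_ge ns : strictly_increasing ns -> forall i, (i <= ns i)%N.
Proof. by move=> h; elim=> [|i IH] //; apply: leq_ltn_trans IH (h i). Qed.

Lemma io_strinc (P : nat -> Prop) : io P ->
  exists ns, strictly_increasing ns /\ forall i, P (ns i).
Proof.
move=> h; have [g hg] := choice h.
pose ns := fix ns i := if i is i'.+1 then g (ns i').+1 else g 0.
exists ns; split => [i|[|i]] /=; first exact: (hg _).1.
- exact: (hg _).2.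
- exact: (hg _).2.
Qed.

Section Char.
Variable R : realType.

Lemma sup_inf_char (T : Type) (G1 G2 : T -> Prop) (v : T -> nat -> R) (lam : R) :
  0 <= lam -> (forall t n, G1 t -> 0 <= v t n <= 1) ->
  lam < sup [set x : R | exists t, [/\ G1 t, G2 t &
     exists ns : nat -> nat, strictly_increasing ns /\
       x = inf [set y : R | exists i : nat, y = v t (ns i)]]]
  <-> exists t, [/\ G1 t, G2 t & exists c, lam < c /\ io (fun n => c <= v t n)].
Proof.
move=> lam0 hv; split.
- set E := [set x | _] => hE.
  case: (pselect (exists x, E x)) => [[x Ex]|nE]; last first.
    by move: hE; rewrite sup_out ?ltNge ?lam0 // => -[[x Ex] _]; apply: nE; exists x.
  have [y [t [g1 g2 [ns [hns ->]]]] hy] := sup_gt (ex_intro _ x Ex) hE.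
  exists t; split => //; exists (inf [set y | exists i, y = v t (ns i)]); split => //.
  move=> N; exists (ns N); split; first exact: strinc_ge.
  apply: ge_inf; last by exists N.
  by exists 0 => z [i ->]; case/andP: (hv t (ns i) g1).
- move=> [t [g1 g2 [c [hc hio]]]].
  have [ns [hns hP]] := io_strinc hio.
  pose x := inf [set y | exists i, y = v t (ns i)].
  have cx : c <= x by apply: lb_le_inf; [exists (v t (ns 0)), 0 | move=> z [i ->]].
  apply: (lt_le_trans hc); apply: (le_trans cx); apply: ub_le_sup.
    exists 1 => z [t' [g1' _ [ns' [_ ->]]]].
    apply: le_trans (ge_inf _ _) _ ; first by exists 0 => z' [i ->]; case/andP: (hv t' (ns' i) g1').
      by exists 0.
    by case/andP: (hv t' (ns' 0) g1').
  by exists t; split => //; exists ns.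
Qed.

Lemma langND_char (Sigma : finType) (A : qautomaton R Sigma) lam w : 0 <= lam ->
  langND A lam w <-> exists psi, [/\ unit_vec psi, @in_F _ _ A psi &
     exists c, lam < c /\ io (fun n => c <= sqmod (innerp psi (run A w n)))].
Proof.
move=> lam0; rewrite /langND /fND /=; apply: sup_inf_char => // psi n hpsi.
by rewrite sqmod_ge0 /= CS_unit //; exact: run_unit.
Qed.

End Char.


Lemma io_pigeon (K : finType) (f : nat -> K) (P : nat -> Prop) :
  io P -> exists k, io (fun n => P n /\ f n = k).
Proof.
move=> hP; apply: contrapT => hn.
have h : forall k, exists N, forall n, (N <= n)%N -> ~ (P n /\ f n = k).
  move=> k; apply: contrapT => hk; apply: hn; exists k => N.
  apply: contrapT => hN; apply: hk; exists N => n hn' hPn; apply: hN; exists n; split => //.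
have [g hg] := choice h.
have [n [hn1 hn2]] := hP (\max_k g k).
apply: (hg (f n) n) => //; apply: leq_trans hn1; exact: leq_bigmax.
Qed.

Lemma io_mono (P Q : nat -> Prop) : (forall n, P n -> Q n) -> io P -> io Q.
Proof. by move=> h hP N; have [n [? ?]] := hP N; exists n; split => //; apply: h. Qed.

Section Grid.
Variable R : realType.
Local Notation C := (complex.complex R).

Definition key (del x : R) : nat := Num.truncn ((x + 1) / del).

Lemma key_close del x y : 0 < del -> -1 <= x -> -1 <= y -> key del x = key del y ->
  `|x - y| < del.
Proof.
move=> d0 hx hy; rewrite /key => e.
have hx' : 0 <= (x + 1) / del by apply: divr_ge0; [lra | exact: ltW].
have hy' : 0 <= (y + 1) / del by apply: divr_ge0; [lra | exact: ltW].
have /andP[a1 a2] := truncn_itv hx'; have /andP[b1 b2] := truncn_itv hy'.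
rewrite e in a1 a2.
have : `|(x + 1) / del - (y + 1) / del| < 1.
  rewrite ltr_norml; apply/andP; split.
    move: b2 a1; rewrite -natr1. lra.
  move: a2 b1; rewrite -natr1. lra.
have dv : 0 < del^-1 by rewrite invr_gt0.
rewrite -mulrBl opprD addrACA subrr addr0 normrM (gtr0_norm dv).
by rewrite ltr_pdivrMr // mul1r.
Qed.

Lemma key_bound del x : 0 < del -> x <= 1 -> (key del x <= Num.truncn (2 / del))%N.
Proof.
move=> d0 hx; apply: le_truncn; rewrite ler_pM2r ?invr_gt0 //; lra.
Qed.


Definition boxed d (e : R) (v : 'cV[C]_d) :=
  forall i, `|complex.Re (v i 0)| <= e /\ `|complex.Im (v i 0)| <= e.

Lemma ReB (x y : C) : complex.Re (x - y) = complex.Re x - complex.Re y.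
Proof. by case: x y => a b [c d]. Qed.
Lemma ImB (x y : C) : complex.Im (x - y) = complex.Im x - complex.Im y.
Proof. by case: x y => a b [c d]. Qed.
Lemma ReD (x y : C) : complex.Re (x + y) = complex.Re x + complex.Re y.
Proof. by case: x y => a b [c d]. Qed.
Lemma ImD (x y : C) : complex.Im (x + y) = complex.Im x + complex.Im y.
Proof. by case: x y => a b [c d]. Qed.

Lemma sqmod_le_norm2 d (v : 'cV[C]_d) i : sqmod (v i 0) <= norm2 v.
Proof.
rewrite /norm2 (bigD1 i) //= lerDl; apply: sumr_ge0 => j _; exact: sqmod_ge0.
Qed.

Lemma sq_le1 (r : R) : r ^+ 2 <= 1 -> `|r| <= 1.
Proof. by move=> h; rewrite ler_norml; apply/andP; split; nra. Qed.

Lemma unit_boxed d (v : 'cV[C]_d) : unit_vec v -> boxed 1 v.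
Proof.
move=> hv i; have := sqmod_le_norm2 v i; rewrite /norm2 hv /sqmod => h.
split; apply: sq_le1.
  have := sqr_ge0 (complex.Im (v i 0)); lra.
have := sqr_ge0 (complex.Re (v i 0)); lra.
Qed.

Definition cell d del (v : 'cV[C]_d) : {ffun 'I_d * bool -> 'I_(Num.truncn (2 / del)).+1} :=
  [ffun p => inord (key del (if p.2 then complex.Re (v p.1 0) else complex.Im (v p.1 0)))].

Lemma cell_close d del (v w : 'cV[C]_d) : 0 < del -> boxed 1 v -> boxed 1 w ->
  cell del v = cell del w -> boxed del (v - w).
Proof.
move=> d0 hv hw e i; rewrite !mxE ReB ImB.
have [hv1 hv2] := hv i; have [hw1 hw2] := hw i.
have kb : forall x : R, `|x| <= 1 -> (key del x < (Num.truncn (2 / del)).+1)%N.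
  by move=> x hx; rewrite ltnS key_bound //; move: hx; rewrite ler_norml => /andP[].
have ge : forall x : R, `|x| <= 1 -> -1 <= x by move=> x; rewrite ler_norml => /andP[].
split; apply: ltW; apply: key_close => //; try by apply: ge.
- move: e => /ffunP /(_ (i, true)); rewrite !ffunE /= => /(congr1 val) /=.
  by rewrite !inordK // kb.
- move: e => /ffunP /(_ (i, false)); rewrite !ffunE /= => /(congr1 val) /=.
  by rewrite !inordK // kb.
Qed.

Lemma io_cluster d (v : nat -> 'cV[C]_d) (P : nat -> Prop) del : 0 < del ->
  (forall n, P n -> boxed 1 (v n)) -> io P ->
  exists n0, P n0 /\ io (fun n => P n /\ boxed del (v n - v n0)).
Proof.
move=> d0 hb hP; have [k hk] := io_pigeon (fun n => cell del (v n)) hP.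
have [n0 [_ [P0 e0]]] := hk 0%N.
exists n0; split => //; apply: io_mono hk => n [Pn en]; split => //.
by apply: cell_close => //; [exact: hb | exact: hb | rewrite en e0].
Qed.


Fixpoint pw d (U : 'M[C]_d) k : 'M[C]_d := if k is k'.+1 then U *m pw U k' else 1%:M.

Lemma pw_add d (U : 'M[C]_d) a b : pw U (a + b) = pw U a *m pw U b.
Proof. by elim: a => [|a IH] /=; rewrite ?mul1mx // IH mulmxA. Qed.

Lemma adjmx1 d : adjmx (1%:M : 'M[C]_d) = 1%:M.
Proof.
have c1 : complex.conjc (1 : C) = 1 by apply/eqP; rewrite complex.eq_complex /= oppr0 !eqxx.
rewrite /adjmx map_scalar_mx /= tr_scalar_mx; congr (_%:M).
by apply/eqP; rewrite complex.eq_complex /= oppr0 !eqxx.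
Qed.

Lemma pw_unit d (U : 'M[C]_d) k : adjmx U *m U = 1%:M -> adjmx (pw U k) *m pw U k = 1%:M.
Proof.
move=> hU; elim: k => [|k IH] /=; first by rewrite adjmx1 mul1mx.
by rewrite adjmxM -mulmxA (mulmxA (adjmx U)) hU mul1mx.
Qed.

Lemma ler_sq_norm (r e : R) : 0 <= e -> r ^+ 2 <= e ^+ 2 -> `|r| <= e.
Proof. by move=> e0 h; rewrite ler_norml; apply/andP; split; nra. Qed.

Lemma norm_sq_le (r e : R) : `|r| <= e -> r ^+ 2 <= e ^+ 2.
Proof. by move=> h; rewrite -real_normK ?num_real //; have := normr_ge0 r; nra. Qed.

Lemma boxed_norm2 d (v : 'cV[C]_d) e : boxed e v -> norm2 v <= d%:R * (2 * e ^+ 2).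
Proof.
move=> hb; rewrite /norm2 mulr_natl -[X in _ *+ X]card_ord -sumr_const; apply: ler_sum => i _.
have [h1 h2] := hb i; rewrite /sqmod; have := norm_sq_le h1; have := norm_sq_le h2; lra.
Qed.

Lemma norm2_boxed d (v : 'cV[C]_d) e : 0 <= e -> norm2 v <= e ^+ 2 -> boxed e v.
Proof.
move=> e0 h i; have := le_trans (sqmod_le_norm2 v i) h; rewrite /sqmod => h'.
have := sqr_ge0 (complex.Re (v i 0)); have := sqr_ge0 (complex.Im (v i 0)) => *.
by split; apply: ler_sq_norm => //; lra.
Qed.

Lemma recur d (U : 'M[C]_d) x del : adjmx U *m U = 1%:M -> unit_vec x -> 0 < del ->
  io (fun m => boxed del (pw U m *m x - x)).
Proof.
move=> hU hx d0.
pose k : R := (2 * d + 1)%:R.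
have k1 : 1 <= k by rewrite /k ler1n addn1.
have k0 : 0 < k by apply: lt_le_trans k1.
pose del' := del / k.
have d0' : 0 < del' by rewrite divr_gt0.
have hb : forall n, True -> boxed 1 (pw U n *m x).
  by move=> n _; apply: unit_boxed; rewrite /unit_vec -[X in X = _]/(norm2 _) norm2M //; apply: pw_unit.
have [n0 [_ hio]] := io_cluster d0' hb (fun N => ex_intro _ N (conj (leqnn N) I)).
move=> N; have [n [hn [_ hbox]]] := hio (n0 + N)%N.
exists (n - n0)%N; split; first by rewrite leq_subRL ?(leq_trans (leq_addr _ _) hn).
have en : n = (n0 + (n - n0))%N by rewrite subnKC // (leq_trans (leq_addr _ _) hn).
apply: norm2_boxed; first exact: ltW.
have : norm2 (pw U n0 *m (pw U (n - n0) *m x - x)) <= d%:R * (2 * del' ^+ 2).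
  by apply: boxed_norm2; rewrite mulmxBr mulmxA -pw_add -en.
rewrite norm2M ?pw_unit // => h; apply: le_trans h _.
have e1 : del' ^+ 2 * k ^+ 2 = del ^+ 2 by rewrite /del' exprMn exprVn -mulrA mulVf ?mulr1 // expf_neq0 // gt_eqF.
rewrite -e1; have dk : 2 * d%:R <= k by rewrite /k natrD natrM lerDl.
have dk2 : k <= k ^+ 2 by rewrite expr2 ler_peMr // ltW.
have dd : 0 <= del' ^+ 2 by apply: sqr_ge0.
nra.
Qed.


Lemma inner_box d (psi v : 'cV[C]_d) e : boxed 1 psi -> boxed e v ->
  `|complex.Re (innerp psi v)| <= d%:R * (e + e) /\ `|complex.Im (innerp psi v)| <= d%:R * (e + e).
Proof.
move=> hp hv; rewrite innerpE Re_sum Im_sum mulr_natl -[X in _ *+ X]card_ord -!sumr_const.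
split; (apply: le_trans (ler_norm_sum _ _ _) _; apply: ler_sum => i _;
  have [p1 p2] := hp i; have [v1 v2] := hv i;
  rewrite ?Re_conjM ?Im_conjM; apply: le_trans (ler_normD _ _) _; rewrite ?normrN normrM ?normrM;
  apply: lerD; rewrite -[e]mul1r; apply: ler_pM => //; exact: normr_ge0).
Qed.

Lemma sqmod_add_ge (a b : C) e : `|complex.Re a| <= 1 -> `|complex.Im a| <= 1 ->
  `|complex.Re b| <= e -> `|complex.Im b| <= e -> sqmod a - 4 * e <= sqmod (a + b).
Proof.
move=> h1 h2 h3 h4; rewrite /sqmod ReD ImD.
have p1 : `|complex.Re a * complex.Re b| <= e.
  by rewrite normrM -[e]mul1r; apply: ler_pM => //; exact: normr_ge0.
have p2 : `|complex.Im a * complex.Im b| <= e.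
  by rewrite normrM -[e]mul1r; apply: ler_pM => //; exact: normr_ge0.
move: p1 p2; rewrite !ler_norml => /andP[p1 p1'] /andP[p2 p2'].
have := sqr_ge0 (complex.Re b); have := sqr_ge0 (complex.Im b).
nra.
Qed.

Lemma inner_unit_box d (psi x : 'cV[C]_d) : unit_vec psi -> unit_vec x ->
  `|complex.Re (innerp psi x)| <= 1 /\ `|complex.Im (innerp psi x)| <= 1.
Proof.
move=> hp hx; have := CS_unit hp hx; rewrite /sqmod => h.
have := sqr_ge0 (complex.Re (innerp psi x)); have := sqr_ge0 (complex.Im (innerp psi x)) => *.
by split; apply: sq_le1; lra.
Qed.

Lemma innerpD d (psi x y : 'cV[C]_d) : innerp psi (x + y) = innerp psi x + innerp psi y.
Proof. by rewrite /innerp mulmxDr mxE. Qed.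

Lemma cont_inner d (psi x y : 'cV[C]_d) e : unit_vec psi -> unit_vec x ->
  boxed e (y - x) -> sqmod (innerp psi x) - 4 * (d%:R * (e + e)) <= sqmod (innerp psi y).
Proof.
move=> hp hx hb.
have -> : y = x + (y - x) by rewrite addrC subrK.
rewrite innerpD; have [a1 a2] := inner_unit_box hp hx.
have [b1 b2] := inner_box (unit_boxed hp) hb.
exact: sqmod_add_ge.
Qed.

End Grid.

Section Key.
Variable R : realType.
Local Notation C := (complex.complex R).

Lemma run_prefix (Sigma : finType) (A : qautomaton R Sigma) w w' n :
  (forall i, (i < n)%N -> w i = w' i) -> run A w n = run A w' n.
Proof.
elim: n => [|n IH] h //=; rewrite h // IH // => i hi; apply: h; exact: ltnW.
Qed.

Lemma run_tail (Sigma : finType) (A : qautomaton R Sigma) w n (s : Sigma) m :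
  (forall i, (n <= i)%N -> w i = s) -> run A w (n + m) = pw (qa_U A s) m *m run A w n.
Proof.
move=> h; elim: m => [|m IH]; first by rewrite addn0 /= mul1mx.
by rewrite addnS /= IH h ?leq_addr // mulmxA.
Qed.

Definition prefix_then (Sigma : Type) (w : nat -> Sigma) n (s : Sigma) :=
  fun i => if (i < n)%N then w i else s.

Lemma key_lemma (Sigma : finType) (A : qautomaton R Sigma) lam w (s : Sigma) :
  0 <= lam -> langND A lam w -> exists n, langND A lam (prefix_then w n s).
Proof.
move=> l0 /(langND_char _ _ l0) [psi [hp hF [c [hc hio]]]].
have [n [_ hn]] := hio 0%N.
exists n; apply/(langND_char _ _ l0); exists psi; split => //.
exists ((c + lam) / 2); split; first by lra.
set w' := prefix_then w n s.
have ew : run A w n = run A w' n by apply: run_prefix => i hi; rewrite /w' /prefix_then hi.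
have tl : forall i, (n <= i)%N -> w' i = s by move=> i hi; rewrite /w' /prefix_then ltnNge hi.
pose dd := (qa_dim A)%:R : R.
pose e := (c - lam) / 2 / (8 * (dd + 1)).
have e0 : 0 < e.
  by rewrite /e !divr_gt0 //; [lra | rewrite mulr_gt0 // ltr_wpDl // /dd ler0n].
have [hU _] := qa_U_unitary A s.
have hrec := recur hU (run_unit A w' n) e0.
move=> N; have [m [hm hb]] := hrec N.
exists (n + m)%N; split; first by apply: leq_trans hm (leq_addl _ _).
rewrite (run_tail _ _ tl).
have := cont_inner hp (run_unit A w' n) hb; rewrite -ew => h.
apply: le_trans h; suff : 4 * (dd * (e + e)) <= (c - lam) / 2 by lra.
have dd0 : 0 <= dd by rewrite /dd ler0n.
have he : e * (8 * (dd + 1)) = (c - lam) / 2.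
  rewrite /e -mulrA mulVf ?mulr1 //; apply: lt0r_neq0; rewrite mulr_gt0 //; lra.
nra.
Qed.

End Key.


Section Cyc.
Variable R : realType.
Local Notation C := (complex.complex R).

Lemma conj01 (b : bool) : complex.conjc (b%:R : C) = b%:R.
Proof. by case: b; apply/eqP; rewrite complex.eq_complex /= oppr0 !eqxx. Qed.

Lemma adjmx_perm n (s : {perm 'I_n}) : adjmx (perm_mx s : 'M[C]_n) = perm_mx (s^-1)%g.
Proof.
rewrite /adjmx -tr_perm_mx; congr (_^T); apply/matrixP => i j; rewrite !mxE.
exact: conj01.
Qed.

Lemma perm_unitary n (s : {perm 'I_n}) : unitary (perm_mx s : 'M[C]_n).
Proof.
by split; rewrite adjmx_perm -perm_mxM ?mulVg ?mulgV perm_mx1.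
Qed.

Lemma unitary1 n : unitary (1%:M : 'M[C]_n).
Proof. by split; rewrite adjmx1 mul1mx. Qed.

Definition ecol n (j : 'I_n) : 'cV[C]_n := delta_mx j 0.

Lemma perm_ecol n (s : {perm 'I_n}) j : perm_mx s *m ecol j = ecol ((s^-1)%g j).
Proof.
apply/matrixP => i k; rewrite [k]ord1 !mxE (bigD1 j) //= big1 => [|l hl]; last first.
  by rewrite !mxE (negPf hl) ?andbF ?andFb mulr0.
rewrite !mxE eqxx andbT mulr1 addr0 ?andbT; congr (_%:R).
by rewrite (can2_eq (permK s) (permKV s)).
Qed.

Lemma ecol_unit n (j : 'I_n) : unit_vec (ecol j).
Proof.
rewrite /unit_vec (bigD1 j) //= big1 => [|i hi]; last by rewrite !mxE (negPf hi) /sqmod /=; ring.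
by rewrite !mxE !eqxx /sqmod /=; ring.
Qed.

Variable M : nat.
Variable t : 'I_M.+1.

Definition shiftp : {perm 'I_M.+1} := perm (@ordS_inj M.+1).

Definition cycU (b : bool) : 'M[C]_M.+1 := if b then perm_mx (shiftp^-1)%g else 1%:M.

Lemma cycU_unitary b : unitary (cycU b).
Proof. by case: b; [exact: perm_unitary | exact: unitary1]. Qed.

Definition cycA : qautomaton R bool :=
  QAutomaton (delta_mx t t) (ecol_unit 0) cycU_unitary.

Fixpoint cst (w : nat -> bool) n : 'I_M.+1 :=
  if n is n'.+1 then (if w n' then ordS (cst w n') else cst w n') else 0.

Lemma cyc_run w n : run cycA w n = ecol (cst w n).
Proof.
elim: n => [|n IH] //=; rewrite IH /cycU; case: (w n); last by rewrite mul1mx.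
by rewrite perm_ecol invgK permE.
Qed.

Lemma cyc_inF (psi : 'cV[C]_M.+1) : @in_F _ _ cycA psi -> forall i, i != t -> psi i 0 = 0.
Proof.
move=> /submxP [X hX] i hi; move/matrixP: hX => /(_ 0 i); rewrite !mxE => ->.
rewrite big1 // => k _; rewrite !mxE (negPf hi) andbF mulr0 //.
Qed.

Lemma cyc_char (lam : R) w : 0 <= lam < 1 ->
  langND cycA lam w <-> io (fun n => cst w n = t).
Proof.
move=> /andP[l0 l1]; rewrite langND_char //; split.
- move=> [psi [hp hF [c [hc hio]]]]; apply: io_mono hio => n.
  rewrite cyc_run innerpE (bigD1 (cst w n)) //= big1 => [|i hi]; last by rewrite !mxE (negPf hi) mulr0.
  rewrite !mxE !eqxx mulr1 addr0.
  have [//|ne] := eqVneq (cst w n) t.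
  rewrite (cyc_inF hF ne) /sqmod /= oppr0 expr0n /= addr0 => hc0.
  by have := lt_le_trans (le_lt_trans l0 hc) hc0; rewrite ltxx.
- move=> hio; exists (ecol t); split; first exact: ecol_unit.
    by rewrite /in_F /= /ecol trmx_delta -(@mul_delta_mx _ 1 M.+1 M.+1 t 0 t) submxMl.
  exists 1; split => //; apply: io_mono hio => n hn.
  rewrite cyc_run hn innerpE (bigD1 t) //= big1 => [|i hi]; last by rewrite !mxE (negPf hi) ?mul0r ?mulr0.
  rewrite !mxE !eqxx /= addr0 /sqmod /=; lra.
Qed.

End Cyc.


Fixpoint cnt (w : nat -> bool) n : nat := if n is n'.+1 then (cnt w n' + w n')%N else 0%N.

Lemma cst_val M (w : nat -> bool) n : val (cst M w n) = (cnt w n %% M.+1)%N.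
Proof.
elim: n => [|n IH] /=; first by rewrite mod0n.
case: (w n) => /=; last by rewrite addn0 IH.
by rewrite IH -addn1 modnDml.
Qed.

Lemma cnt_step (w : nat -> bool) : forall d n, w (n + d)%N ->
  exists n', (n <= n')%N /\ cnt w n' = (cnt w n).+1.
Proof.
elim=> [|d IH] n h.
  by exists n.+1; split => //; move: h; rewrite addn0 /= => ->; rewrite addn1.
case hn : (w n); first by exists n.+1; split => //=; rewrite hn addn1.
have [n' [h1 h2]] : exists n', (n.+1 <= n')%N /\ cnt w n' = (cnt w n.+1).+1.
  by apply: IH; rewrite addSnnS.
by exists n'; split; [exact: ltnW | rewrite h2 /= hn addn0].
Qed.

Lemma cnt_ivt (w : nat -> bool) : io (fun n => w n = true) ->
  forall d N, exists n, (N <= n)%N /\ cnt w n = (cnt w N + d)%N.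
Proof.
move=> hio; elim=> [|d IH] N; first by exists N; rewrite addn0.
have [n [hn e]] := IH N.
have [m [hm wm]] := hio n.
have [n' [h1 h2]] : exists n', (n <= n')%N /\ cnt w n' = (cnt w n).+1.
  by apply: (@cnt_step w (m - n) n); rewrite subnKC // wm.
by exists n'; split; [exact: leq_trans h1 | rewrite h2 e addnS].
Qed.

Lemma cnt_const (w : nat -> bool) n : (forall i, (n <= i)%N -> w i = false) ->
  forall i, (n <= i)%N -> cnt w i = cnt w n.
Proof.
move=> h; elim=> [|i IH] hi; first by move: hi; rewrite leqn0 => /eqP ->.
case: (ltngtP n i.+1) hi => // [hlt _|-> //].
by rewrite /= IH // h // addn0.
Qed.

Lemma cst_const M (w : nat -> bool) n : (forall i, (n <= i)%N -> w i = false) ->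
  forall i, (n <= i)%N -> cst M w i = cst M w n.
Proof. by move=> h i hi; apply: val_inj; rewrite !cst_val (cnt_const h). Qed.

Lemma prefix_false (w : nat -> bool) n : forall i, (n <= i)%N -> prefix_then w n false i = false.
Proof. by move=> i hi; rewrite /prefix_then ltnNge hi. Qed.

Lemma cnt_true n : cnt (fun _ => true) n = n.
Proof. by elim: n => //= n ->; rewrite addn1. Qed.

Lemma cnt_false n : cnt (fun _ => false) n = 0%N.
Proof. by elim: n => //= n ->. Qed.

Section Parts.
Variable R : realType.

Lemma part5 (lam : R) : 0 <= lam < 1 ->
   exists (Sigma : finType) (L1 L2 : set (nat -> Sigma)),
     QBA_ND lam L1 /\ QBA_ND lam L2 /\ ~ QBA_ND lam (L1 `&` L2).
Proof.
move=> hl; have l0 : 0 <= lam by case/andP: hl.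
pose A1 := cycA R (@ord_max 1); pose A2 := cycA R (@ord0 1).
exists bool, (langND A1 lam), (langND A2 lam).
split; first by exists A1.
split; first by exists A2.
move=> [A hA].
have wT : (langND A1 lam `&` langND A2 lam) (fun _ => true).
  split; apply/(cyc_char _ _ hl) => N.
    exists (N.*2.+1); split; first by rewrite -addnn -addSn leq_addl.
    by apply: val_inj; rewrite cst_val cnt_true modn2 /= odd_double.
  exists (N.*2); split; first by rewrite -addnn leq_addl.
  by apply: val_inj; rewrite cst_val cnt_true modn2 /= odd_double.
rewrite hA in wT; have [n hn] := key_lemma false l0 wT.
rewrite -hA in hn; case: hn => /(cyc_char _ _ hl) h1 /(cyc_char _ _ hl) h2.
have [i [hi ei]] := h1 n; have [j [hj ej]] := h2 n.
rewrite (@cst_const 1 _ n (@prefix_false _ n)) // in ei.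
rewrite (@cst_const 1 _ n (@prefix_false _ n)) // ei in ej.
by move: ej => /(congr1 val).
Qed.


Lemma part4 (lam : R) : 0 <= lam < 1 ->
   exists (Sigma : finType) (L : set (nat -> Sigma)),
     QBA_ND lam L /\ ~ QBA_ND lam (~` L).
Proof.
move=> hl; have l0 : 0 <= lam by case/andP: hl.
pose A1 := cycA R (@ord_max 1).
exists bool, (langND A1 lam); split; first by exists A1.
move=> [A hA].
have wF : (~` langND A1 lam) (fun _ => false).
  move=> /(cyc_char _ _ hl) /(_ 0%N) [n [_ /(congr1 val)]].
  by rewrite cst_val cnt_false.
rewrite hA in wF; have [n hn] := key_lemma true l0 wF.
rewrite -hA in hn; apply: hn; apply/(cyc_char _ _ hl) => N.
pose i := maxn N n.
have hi : (n <= i)%N by rewrite leq_maxr.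
have Ni : (N <= i)%N by rewrite leq_maxl.
set w' := prefix_then _ _ _.
have wi : w' i = true by rewrite /w' /prefix_then ltnNge hi.
case ho : (odd (cnt w' i)).
  exists i; split => //; apply: val_inj; by rewrite cst_val modn2 ho.
exists i.+1; split; first exact: leqW.
by apply: val_inj; rewrite cst_val modn2 /= wi addn1 /= ho.
Qed.


Lemma part3 (lam : R) : 0 <= lam < 1 ->
   exists (Sigma : finType) (Ls : nat -> set (nat -> Sigma)) (L : set (nat -> Sigma)),
     (forall k, QBA_ND lam (Ls k)) /\ set_lim_is Ls L /\ ~ QBA_ND lam L.
Proof.
move=> hl; have l0 : 0 <= lam by case/andP: hl.
pose Ak k := cycA R (@ord_max k.+1).
pose L := fun w : nat -> bool => io (fun n => w n = true).
have chk : forall k w, langND (Ak k) lam w <-> io (fun n => (cnt w n %% k.+2)%N = k.+1).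
  move=> k w; rewrite (cyc_char _ _ hl); split; apply: io_mono => n.
    by move/(congr1 val); rewrite cst_val.
  by move=> h; apply: val_inj; rewrite cst_val h.
have ha : forall w, L w -> forall k, langND (Ak k) lam w.
  move=> w hw k; apply/chk => N.
  pose m := k.+2; pose V := ((cnt w N %/ m) * m + k.+1)%N.
  have hV : (cnt w N <= V)%N.
    rewrite /V {1}(divn_eq (cnt w N) m) leq_add2l -ltnS.
    by rewrite ltn_mod.
  have [n [hn e]] := cnt_ivt hw (V - cnt w N) N.
  exists n; split => //; rewrite e subnKC // /V modnMDl modn_small //.
have hb : forall w, ~ L w -> exists c0, forall k, (c0 <= k)%N -> ~ langND (Ak k) lam w.
  move=> w hw.
  have [N0 hN0] : exists N0, forall i, (N0 <= i)%N -> w i = false.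
    apply: contrapT => hn; apply: hw => N; apply: contrapT => hN; apply: hn.
    exists N; move=> i hi; case hwi : (w i) => //; exfalso; apply: hN; exists i; split => //.
  exists (cnt w N0) => k hk /chk /(_ N0) [n [hn e]].
  rewrite (cnt_const hN0) // in e.
  have := leq_mod (cnt w N0) k.+2; rewrite e => h.
  by move: (leq_trans h hk); rewrite ltnn.
exists bool, (fun k => langND (Ak k) lam), L; split; first by move=> k; exists (Ak k).
split.
  split; apply/seteqP; split => w /=.
  - move=> [k hk]; apply: contrapT => hw; have [c0 hc0] := hb w hw.
    by apply: (hc0 (maxn k c0)); [exact: leq_maxr | apply: hk; exact: leq_maxl].
  - by move=> hw; exists 0%N => j _; apply: ha.
  - move=> hk; apply: contrapT => hw; have [c0 hc0] := hb w hw.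
    by have [j [hj hj']] := hk c0; exact: (hc0 j hj hj').
  - by move=> hw k; exists k; split => //; apply: ha.
move=> [A hA].
have wT : L (fun _ => true) by move=> N; exists N.
rewrite hA in wT; have [n hn] := key_lemma false l0 wT.
rewrite -hA in hn; have [i [hi wi]] := hn n.
by rewrite prefix_false in wi.
Qed.

End Parts.


Section Mask.
Variable R : realType.
Local Notation C := (complex.complex R).

Lemma sqmod_real (r : R) : sqmod (r%:C%C) = r ^+ 2.
Proof. by rewrite /sqmod /= expr0n /= addr0. Qed.

Lemma conjc_real (r : R) : complex.conjc (r%:C%C) = r%:C%C.
Proof. by apply/eqP; rewrite complex.eq_complex /= oppr0 !eqxx. Qed.

Lemma innerp_scalel d (k : C) (psi x : 'cV[C]_d) :
  innerp (k *: psi) x = complex.conjc k * innerp psi x.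
Proof.
rewrite !innerpE mulr_sumr; apply: eq_bigr => i _; rewrite !mxE -!conjCE rmorphM /=.
by rewrite mulrA.
Qed.

Lemma norm2_scale d (k : C) (v : 'cV[C]_d) : norm2 (k *: v) = sqmod k * norm2 v.
Proof. by rewrite /norm2 mulr_sumr; apply: eq_bigr => i _; rewrite mxE sqmodM. Qed.

Definition qS d (S : 'I_d -> bool) (x : 'cV[C]_d) : R := \sum_(i | S i) sqmod (x i 0).
Definition pmask d (S : 'I_d -> bool) (x : 'cV[C]_d) : 'cV[C]_d :=
  \col_i (if S i then x i 0 else 0).

Lemma qS_ge0 d S (x : 'cV[C]_d) : 0 <= qS S x.
Proof. by apply: sumr_ge0 => i _; exact: sqmod_ge0. Qed.

Lemma qS_le d S (x : 'cV[C]_d) : qS S x <= norm2 x.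
Proof.
rewrite /qS /norm2 [X in _ <= X](bigID S) /= lerDl; apply: sumr_ge0 => i _; exact: sqmod_ge0.
Qed.

Lemma norm2_pmask d S (x : 'cV[C]_d) : norm2 (pmask S x) = qS S x.
Proof.
rewrite /norm2 /qS [RHS]big_mkcond /=; apply: eq_bigr => i _; rewrite mxE.
by case: (S i) => //; rewrite /sqmod /= expr0n /= addr0.
Qed.

Lemma innerp_pmask d S (psi x : 'cV[C]_d) : (forall i, ~~ S i -> psi i 0 = 0) ->
  innerp psi x = innerp psi (pmask S x).
Proof.
move=> h; rewrite !innerpE; apply: eq_bigr => i _; rewrite mxE.
case hi : (S i) => //; rewrite (h i) ?hi // mulr0.
have -> : complex.conjc (0:C) = 0 by apply/eqP; rewrite complex.eq_complex /= oppr0 !eqxx.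
by rewrite mul0r.
Qed.

Lemma CSq d S (psi x : 'cV[C]_d) : unit_vec psi -> (forall i, ~~ S i -> psi i 0 = 0) ->
  sqmod (innerp psi x) <= qS S x.
Proof.
move=> hp h; rewrite (innerp_pmask x h) -norm2_pmask.
by have := CS psi (pmask S x); rewrite /norm2 -/(norm2 psi) [norm2 psi]hp mul1r.
Qed.

Lemma boxed_pmask d S (x : 'cV[C]_d) e : 0 <= e -> boxed e x -> boxed e (pmask S x).
Proof.
move=> e0 h i; rewrite mxE; case: (S i); first exact: h.
by rewrite /= normr0; split.
Qed.

Lemma small_e (d : nat) (eta : R) : 0 < eta ->
  exists e : R, 0 < e /\ 4 * (d%:R * (e + e)) <= eta.
Proof.
move=> h; pose dd : R := d%:R.
have dd0 : 0 <= dd by rewrite /dd ler0n.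
exists (eta / (8 * (dd + 1))); split.
  by rewrite divr_gt0 // mulr_gt0 //; lra.
have he : eta / (8 * (dd + 1)) * (8 * (dd + 1)) = eta.
  by rewrite -mulrA mulVf ?mulr1 //; apply: lt0r_neq0; rewrite mulr_gt0 //; lra.
have : 0 < eta / (8 * (dd + 1)) by rewrite divr_gt0 // mulr_gt0 //; lra.
rewrite -/dd; nra.
Qed.

Variable Sigma : finType.

Record MA := MkMA {
  ma_dim : nat;
  ma_init : 'cV[C]_ma_dim;
  ma_U : Sigma -> 'M[C]_ma_dim;
  ma_S : 'I_ma_dim -> bool;
  ma_unit : unit_vec ma_init;
  ma_unitary : forall a, unitary (ma_U a)
}.

Definition maskmx d (S : 'I_d -> bool) : 'M[C]_d := diag_mx (\row_i (S i)%:R).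

Definition toQA (M : MA) : qautomaton R Sigma :=
  QAutomaton (maskmx (@ma_S M)) (ma_unit M) (ma_unitary M).

Lemma inF_mask (M : MA) psi :
  @in_F _ _ (toQA M) psi <-> forall i, ~~ @ma_S M i -> psi i 0 = 0.
Proof.
split.
  move=> /submxP [X hX] i hi; move/matrixP: hX => /(_ 0 i).
  by rewrite /= /maskmx mul_mx_diag !mxE (negPf hi) mulr0.
move=> h; rewrite /in_F /= /maskmx.
have -> : psi^T = psi^T *m diag_mx (\row_i (@ma_S M i)%:R).
  apply/matrixP => k j; rewrite mul_mx_diag !mxE.
  rewrite [k]ord1; case hj : (@ma_S M j); rewrite ?mulr1 ?mulr0 //; apply: h; by rewrite hj.
exact: submxMl.
Qed.

Definition qv (M : MA) w n := qS (@ma_S M) (run (toQA M) w n).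

Lemma qv_ge0 M w n : 0 <= qv M w n.
Proof. exact: qS_ge0. Qed.

Lemma qv_le1 M w n : qv M w n <= 1.
Proof. by apply: le_trans (qS_le _ _) _; rewrite /norm2 (run_unit (toQA M) w n). Qed.

Lemma ma_char (M : MA) lam w : 0 <= lam ->
  langND (toQA M) lam w <-> exists c, lam < c /\ io (fun n => c <= qv M w n).
Proof.
move=> l0; rewrite langND_char //; split.
  move=> [psi [hp /inF_mask hF [c [hc hio]]]]; exists c; split => //.
  by apply: io_mono hio => n h; apply: le_trans h _; apply: CSq.
move=> [c [hc hio]].
set S := @ma_S M.
pose x n := run (toQA M) w n.
pose y n := pmask S (x n).
have hcl : 0 < (c - lam) / 2 by lra.
have [e [e0 he]] := small_e (ma_dim M) hcl.
have hb : forall n, (fun n => c <= qv M w n) n -> boxed 1 (y n).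
  by move=> n _; apply: boxed_pmask => //; apply: unit_boxed; exact: (run_unit (toQA M) w n).
have [n0 [hn0 hio']] := io_cluster e0 hb hio.
pose q0 := qv M w n0.
have q0pos : 0 < q0 by apply: lt_le_trans hn0; apply: le_lt_trans hc.
pose a := (Num.sqrt q0)^-1.
pose psi := (a%:C)%C *: y n0.
have sq0 : 0 < Num.sqrt q0 by rewrite sqrtr_gt0.
have ha2 : a ^+ 2 * q0 = 1.
  by rewrite /a exprVn sqr_sqrtr ?mulVf // ?gt_eqF // ltW.
have hp : unit_vec psi.
  rewrite /unit_vec -/(norm2 psi) norm2_scale sqmod_real norm2_pmask; exact: ha2.
have hsupp : forall i, ~~ S i -> psi i 0 = 0.
  by move=> i hi; rewrite !mxE (negPf hi) mulr0.
exists psi; split => //; first by apply/inF_mask.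
exists ((c + lam) / 2); split; first by lra.
have hx : forall n, innerp psi (x n) = innerp psi (y n) by move=> n; apply: innerp_pmask.
have h0 : sqmod (innerp psi (x n0)) = q0.
  rewrite hx innerp_scalel conjc_real -norm2C norm2_pmask -/(qv M w n0) -/q0.
  rewrite -rmorphM /= sqmod_real exprMn -mulrA.
  by rewrite mulrA -expr2 expr2 mulrA ha2 mul1r.
apply: io_mono hio' => n [hcn hbn].
have e1 : innerp psi (x n) = innerp psi (x n0) + innerp psi (y n - y n0).
  by rewrite hx hx -innerpD addrC subrK.
rewrite -/(x n) e1.
have [a1 a2] := inner_unit_box hp (run_unit (toQA M) w n0).
have [b1 b2] := inner_box (unit_boxed hp) hbn.
have := sqmod_add_ge a1 a2 b1 b2; rewrite h0 => h.
apply: le_trans h; move: he hn0; rewrite -/q0; lra.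
Qed.

End Mask.


Section Cons.
Variable R : realType.
Local Notation C := (complex.complex R).
Variable Sigma : finType.
Local Notation MA := (MA R Sigma).

Lemma split_lshift m n (j : 'I_m) : split (lshift n j) = inl j.
Proof. exact: (unsplitK (inl _ j)). Qed.
Lemma split_rshift m n (j : 'I_n) : split (rshift m j) = inr j.
Proof. exact: (unsplitK (inr _ j)). Qed.

Definition sumS m n (S1 : 'I_m -> bool) (S2 : 'I_n -> bool) (i : 'I_(m + n)) : bool :=
  match split i with inl j => S1 j | inr j => S2 j end.

Lemma qS_col m n (S1 : 'I_m -> bool) (S2 : 'I_n -> bool) (x : 'cV[C]_m) (y : 'cV[C]_n) :
  qS (sumS S1 S2) (col_mx x y) = qS S1 x + qS S2 y.
Proof.
rewrite /qS big_split_ord /=; congr (_ + _); apply: eq_big => i.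
- by rewrite /sumS split_lshift.
- by move=> _; rewrite col_mxEu.
- by rewrite /sumS split_rshift.
- by move=> _; rewrite col_mxEd.
Qed.

Lemma qST d (x : 'cV[C]_d) : qS (fun _ => true) x = norm2 x.
Proof. by []. Qed.

Lemma qS_scale d S (k : C) (x : 'cV[C]_d) : qS S (k *: x) = sqmod k * qS S x.
Proof. by rewrite /qS mulr_sumr; apply: eq_bigr => i _; rewrite mxE sqmodM. Qed.

Lemma norm2_col m n (x : 'cV[C]_m) (y : 'cV[C]_n) : norm2 (col_mx x y) = norm2 x + norm2 y.
Proof. by rewrite -!qST -(qS_col (fun _ => true) (fun _ => true)); apply: eq_bigl => i; rewrite /sumS; case: split. Qed.

Lemma map_conj0 m n : map_mx (@complex.conjc R) (0 : 'M[C]_(m, n)) = 0.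
Proof. by apply/matrixP => i j; rewrite !mxE; apply/eqP; rewrite complex.eq_complex /= oppr0 !eqxx. Qed.

Lemma adjmx0 m n : adjmx (0 : 'M[C]_(m, n)) = 0.
Proof. by rewrite /adjmx map_conj0 trmx0. Qed.

Lemma adjmx_block m n (A : 'M[C]_m) (B : 'M[C]_n) :
  adjmx (block_mx A 0 0 B) = block_mx (adjmx A) 0 0 (adjmx B).
Proof. by rewrite /adjmx map_block_mx tr_block_mx !map_conj0 !trmx0. Qed.

Lemma unitary_block m n (A : 'M[C]_m) (B : 'M[C]_n) :
  unitary A -> unitary B -> unitary (block_mx A 0 0 B).
Proof.
move=> [h1 h2] [h3 h4]; rewrite /unitary adjmx_block !mulmx_block.
by rewrite h1 h2 h3 h4 !mulmx0 !mul0mx !addr0 !add0r -!scalar_mx_block.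
Qed.

Definition sum_init (a b : R) (M1 M2 : MA) : 'cV[C]_(ma_dim M1 + ma_dim M2) :=
  col_mx ((a%:C)%C *: ma_init M1) ((b%:C)%C *: ma_init M2).

Lemma sum_init_unit (a b : R) (M1 M2 : MA) : a ^+ 2 + b ^+ 2 = 1 -> unit_vec (sum_init a b M1 M2).
Proof.
move=> h; rewrite /unit_vec -/(norm2 _) /sum_init norm2_col !norm2_scale !sqmod_real.
by rewrite /norm2 (ma_unit M1) (ma_unit M2) !mulr1.
Qed.

Definition ma_sum (a b : R) (h : a ^+ 2 + b ^+ 2 = 1) (M1 M2 : MA) : MA :=
  @MkMA R Sigma (ma_dim M1 + ma_dim M2) (sum_init a b M1 M2)
    (fun s => block_mx (ma_U M1 s) 0 0 (ma_U M2 s)) (sumS (@ma_S _ _ M1) (@ma_S _ _ M2))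
    (sum_init_unit M1 M2 h)
    (fun s => unitary_block (ma_unitary M1 s) (ma_unitary M2 s)).

Lemma run_sum a b h M1 M2 w n :
  run (toQA (@ma_sum a b h M1 M2)) w n =
  col_mx ((a%:C)%C *: run (toQA M1) w n) ((b%:C)%C *: run (toQA M2) w n).
Proof.
elim: n => [|n IH] //=; rewrite IH mul_block_col !mul0mx addr0 add0r.
by rewrite !scalemxAr.
Qed.

Lemma qv_sum a b h M1 M2 w n :
  qv (@ma_sum a b h M1 M2) w n = a ^+ 2 * qv M1 w n + b ^+ 2 * qv M2 w n.
Proof. by rewrite /qv run_sum qS_col !qS_scale !sqmod_real. Qed.


Lemma tens11 m n : (1%:M : 'M[C]_m) *t (1%:M : 'M[C]_n) = 1%:M.
Proof.
apply/matrixP => i j; case: (mxtens_indexP i) => i1 i2; case: (mxtens_indexP j) => j1 j2.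
rewrite tensmxE !mxE -natrM mulnb; congr (_%:R).
by rewrite (can_eq (@mxtens_indexK _ _)) xpair_eqE.
Qed.

Lemma adjmx_tens m n p q (A : 'M[C]_(m, n)) (B : 'M[C]_(p, q)) :
  adjmx (A *t B) = adjmx A *t adjmx B.
Proof.
rewrite /adjmx -trmx_tens; congr (_^T).
apply/matrixP => i j; rewrite !mxE -!conjCE rmorphM //.
Qed.

Lemma unitary_tens m n (A : 'M[C]_m) (B : 'M[C]_n) :
  unitary A -> unitary B -> unitary (A *t B).
Proof.
move=> [h1 h2] [h3 h4]; rewrite /unitary adjmx_tens !tensmx_mul.
by rewrite h1 h2 h3 h4 tens11.
Qed.

Definition tcol m n (x : 'cV[C]_m) (y : 'cV[C]_n) : 'cV[C]_(m * n) := x *t y.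

Lemma tcolE m n (x : 'cV[C]_m) (y : 'cV[C]_n) i j :
  tcol x y (mxtens_index (i, j)) 0 = x i 0 * y j 0.
Proof. by rewrite /tcol mxE mxtens_indexK /= !ord1. Qed.

Definition tensS m n (S1 : 'I_m -> bool) (S2 : 'I_n -> bool) (i : 'I_(m * n)) : bool :=
  S1 (mxtens_unindex i).1 && S2 (mxtens_unindex i).2.

Lemma qS_tens m n (S1 : 'I_m -> bool) (S2 : 'I_n -> bool) (x : 'cV[C]_m) (y : 'cV[C]_n) :
  qS (tensS S1 S2) (tcol x y) = qS S1 x * qS S2 y.
Proof.
rewrite /qS (reindex (@mxtens_index m n)) /=; last first.
  by exists (@mxtens_unindex m n) => k _; [exact: mxtens_indexK | exact: mxtens_unindexK].
rewrite big_distrlr /= pair_big_dep /=; apply: eq_big => [[i j]|[i j] _].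
  by rewrite /tensS mxtens_indexK.
by rewrite tcolE sqmodM.
Qed.

Lemma tcol_unit m n (x : 'cV[C]_m) (y : 'cV[C]_n) : unit_vec x -> unit_vec y -> unit_vec (tcol x y).
Proof.
move=> hx hy; rewrite /unit_vec -/(norm2 _) -qST.
have -> : qS (fun _ => true) (tcol x y) = qS (tensS (fun _ => true) (fun _ => true)) (tcol x y) by [].
by rewrite qS_tens !qST /norm2 hx hy mulr1.
Qed.

Definition ma_tens (M1 M2 : MA) : MA :=
  @MkMA R Sigma (ma_dim M1 * ma_dim M2) (tcol (ma_init M1) (ma_init M2))
    (fun s => ma_U M1 s *t ma_U M2 s) (tensS (@ma_S _ _ M1) (@ma_S _ _ M2))
    (tcol_unit (ma_unit M1) (ma_unit M2))
    (fun s => unitary_tens (ma_unitary M1 s) (ma_unitary M2 s)).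

Lemma tens_mul_col m n (A : 'M[C]_m) (B : 'M[C]_n) x y :
  (A *t B) *m tcol x y = tcol (A *m x) (B *m y).
Proof. exact: (tensmx_mul A B x y). Qed.

Lemma run_tens M1 M2 w n :
  run (toQA (ma_tens M1 M2)) w n = tcol (run (toQA M1) w n) (run (toQA M2) w n).
Proof. by elim: n => [|n IH] //=; rewrite IH tens_mul_col. Qed.

Lemma qv_tens M1 M2 w n : qv (ma_tens M1 M2) w n = qv M1 w n * qv M2 w n.
Proof. by rewrite /qv run_tens qS_tens. Qed.

Definition one_init : 'cV[C]_1 := 1%:M.

Lemma one_init_unit : unit_vec one_init.
Proof. by rewrite /unit_vec big_ord1 !mxE /= /sqmod /=; ring. Qed.

Definition ma_one : MA :=
  @MkMA R Sigma 1 one_init (fun _ => 1%:M) (fun _ => true) one_init_unit (fun _ => @unitary1 R 1).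

Lemma qv_one w n : qv ma_one w n = 1.
Proof.
rewrite /qv; have -> : run (toQA ma_one) w n = one_init by elim: n => //= n ->; rewrite mul1mx.
exact: one_init_unit.
Qed.

Fixpoint ma_pow (M : MA) k : MA := if k is k'.+1 then ma_tens M (ma_pow M k') else ma_one.

Lemma qv_pow M k w n : qv (ma_pow M k) w n = qv M w n ^+ k.
Proof. by elim: k => [|k IH] /=; rewrite ?qv_one ?expr0 // qv_tens IH exprS. Qed.

End Cons.


Local Notation "B ^!" := (orthomx Num.conj (mx_of_hermitian (hermitian1mx _)) B) : matrix_set_scope.
Local Notation "A '_|_ B" := (A%MS <= B%MS^!)%MS : bool_scope.

Section Canon.
Variable R : realType.
Local Notation C := (complex.complex R).

Lemma adjmxE m n (A : 'M[C]_(m, n)) : adjmx A = map_mx Num.conj A^T.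
Proof. by apply/matrixP => i j; rewrite !mxE conjCE. Qed.

Lemma adjmxK m n (A : 'M[C]_(m, n)) : adjmx (adjmx A) = A.
Proof. by rewrite !adjmxE; apply: trmxCK. Qed.

Lemma innerpM' m n (U : 'M[C]_(m, n)) (x y : 'cV[C]_n) :
  adjmx U *m U = 1%:M -> innerp (U *m x) (U *m y) = innerp x y.
Proof. by move=> hU; rewrite /innerp adjmxM -mulmxA (mulmxA (adjmx U)) hU mul1mx. Qed.

Lemma norm2M' m n (U : 'M[C]_(m, n)) (x : 'cV[C]_n) :
  adjmx U *m U = 1%:M -> norm2 (U *m x) = norm2 x.
Proof. by move=> hU; apply: (@complex.complexI R); rewrite !norm2C innerpM'. Qed.

Variable d : nat.
Variable X : 'M[C]_d.

Definition rr := \rank X.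
Definition rr' := \rank (X^!)%MS.
Definition WW : 'M[C]_(rr + rr', d) := schmidt_complete X.
Definition VV : 'M[C]_(rr + rr', d) := map_mx Num.conj WW.

Lemma hdim : (rr + rr')%N = d.
Proof. exact: add_rank_ortho. Qed.

Lemma WW_unit : WW *m map_mx Num.conj WW^T = 1%:M.
Proof. exact/unitarymxP/schmidt_complete_unitarymx. Qed.

Lemma WW_unit2 : map_mx Num.conj WW^T *m WW = 1%:M.
Proof.
have := @mulmxKtV _ _ _ _ (1%:M : 'M[C]_d) WW (schmidt_complete_unitarymx X) hdim.
by rewrite mul1mx.
Qed.

Lemma adjVV : adjmx VV = WW^T.
Proof. by rewrite adjmxE; apply/matrixP => i j; rewrite !mxE conjCK. Qed.

Lemma VV1 : adjmx VV *m VV = 1%:M.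
Proof.
rewrite adjVV /VV.
have := congr1 (map_mx Num.conj) WW_unit2; rewrite map_mxM map_mx1 => <-.
congr (_ *m _); apply/matrixP => i j; rewrite !mxE /= conjCK //.
Qed.

Lemma VV2 : VV *m adjmx VV = 1%:M.
Proof.
rewrite adjVV /VV.
have := congr1 (map_mx Num.conj) WW_unit; rewrite map_mxM map_mx1 => <-.
congr (_ *m _); apply/matrixP => i j; rewrite !mxE /= conjCK //.
Qed.


Definition SS (i : 'I_(rr + rr')) : bool := if split i is inl _ then true else false.
Definition BB : 'M[C]_(rr', d) := schmidt (row_base (X^!)%MS).

Lemma BB_eq : (BB :=: X^!)%MS.
Proof.
apply: eqmx_trans (eq_row_base _); apply: eqmx_schmidt_free; exact: row_base_free.
Qed.

Lemma VV_entry (psi : 'cV[C]_d) j :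
  (VV *m psi) (rshift rr j) 0 = (psi^T *m map_mx Num.conj BB^T) 0 j.
Proof.
rewrite !mxE; apply: eq_bigr => k _; rewrite !mxE /WW /schmidt_complete split_rshift -/BB mulrC //.
Qed.

Lemma inF_VV (psi : 'cV[C]_d) :
  (psi^T <= X)%MS <-> forall i, ~~ SS i -> (VV *m psi) i 0 = 0.
Proof.
have e1 : (forall i, ~~ SS i -> (VV *m psi) i 0 = 0) <-> psi^T *m map_mx Num.conj BB^T = 0.
  split.
    move=> h; apply/matrixP => k j; rewrite [k]ord1 -VV_entry h ?mxE //.
    by rewrite /SS split_rshift.
  move=> h i; rewrite /SS; case hs : (split i) => [j|j] // _.
  have -> : i = rshift rr j by rewrite -(splitK i) hs.
  by rewrite VV_entry h mxE.
have key : (psi^T '_|_ BB) = (psi^T <= X)%MS by rewrite orthomx_sym BB_eq submx_ortho.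
rewrite e1 -key; split => h; [exact/orthomx1P | exact/orthomx1P].
Qed.

End Canon.

Section Canon2.
Variable R : realType.
Local Notation C := (complex.complex R).
Variable Sigma : finType.
Variable A : qautomaton R Sigma.

Local Notation V := (VV (qa_F A)).

Lemma canon_init_unit : unit_vec (V *m qa_init A).
Proof. by rewrite /unit_vec -/(norm2 _) norm2M' ?VV1 //; exact: qa_init_unit. Qed.

Definition canon_U s := V *m qa_U A s *m adjmx V.

Lemma canon_U_unitary s : unitary (canon_U s).
Proof.
have [h1 h2] := qa_U_unitary A s.
rewrite /unitary /canon_U !adjmxM adjmxK; split.
- rewrite -!mulmxA (mulmxA (adjmx V) V) VV1 mul1mx.
  by rewrite (mulmxA (adjmx (qa_U A s))) h1 mul1mx VV2.
- rewrite -!mulmxA (mulmxA (adjmx V) V) VV1 mul1mx.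
  by rewrite (mulmxA (qa_U A s)) h2 mul1mx VV2.
Qed.

Definition canonMA : MA R Sigma :=
  @MkMA R Sigma _ (V *m qa_init A) canon_U (@SS R _ (qa_F A)) canon_init_unit canon_U_unitary.

Lemma run_canon w n : run (toQA canonMA) w n = V *m run A w n.
Proof.
elim: n => [|n IH] //=; rewrite IH /canon_U -!mulmxA; congr (_ *m _).
by rewrite (mulmxA (adjmx V)) VV1 mul1mx.
Qed.

Lemma innerp_adj m n (U : 'M[C]_(m, n)) psi x : innerp psi (U *m x) = innerp (adjmx U *m psi) x.
Proof. by rewrite /innerp adjmxM adjmxK mulmxA. Qed.

Lemma fND_canon w : fND (toQA canonMA) w = fND A w.
Proof.
rewrite /fND; congr sup; apply/seteqP; split => x [psi [hu hF [ns [hns ->]]]].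
- exists (adjmx V *m psi).
  have epsi : V *m (adjmx V *m psi) = psi by rewrite mulmxA VV2 mul1mx.
  split.
  + rewrite /unit_vec -/(norm2 _) norm2M' //; first by rewrite adjmxK VV2.
  + apply/(inF_VV (qa_F A)); rewrite epsi; by move/inF_mask: hF.
  + exists ns; split => //; congr inf; apply/seteqP; split => y [i ->]; exists i;
      by rewrite run_canon innerp_adj.
- exists (V *m psi); split.
  + by rewrite /unit_vec -/(norm2 _) norm2M' // VV1.
  + by apply/inF_mask; apply/(inF_VV (qa_F A)).
  + exists ns; split => //; congr inf; apply/seteqP; split => y [i ->]; exists i;
      by rewrite run_canon innerpM' // VV1.
Qed.

Lemma langND_canon lam : langND (toQA canonMA) lam = langND A lam.
Proof. by apply/seteqP; split => w; rewrite /langND /= fND_canon. Qed.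

End Canon2.


Lemma not_io (P : nat -> Prop) : ~ io P -> exists N, forall n, (N <= n)%N -> ~ P n.
Proof.
move=> h; apply: contrapT => hn; apply: h => N; apply: contrapT => hN; apply: hn.
by exists N => n hn hP; apply: hN; exists n.
Qed.

Lemma io_or (P Q : nat -> Prop) : io (fun n => P n \/ Q n) -> io P \/ io Q.
Proof.
move=> h; case: (pselect (io P)) => hP; [by left | right].
have [N hN] := not_io hP.
move=> M; have [n [hn [Pn|Qn]]] := h (maxn N M).
  by exfalso; apply: (hN n) => //; apply: leq_trans hn; exact: leq_maxl.
by exists n; split => //; apply: leq_trans hn; exact: leq_maxr.
Qed.

Section Real.
Variable R : realType.

Lemma bernoulli (x : R) n : 0 <= x -> 1 + n%:R * x <= (1 + x) ^+ n.
Proof.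
move=> x0; elim: n => [|n IH]; first by rewrite mul0r addr0 expr0.
rewrite exprS -natr1 mulrDl mul1r.
have h1 : 0 <= n%:R * x by rewrite mulr_ge0 // ler0n.
nra.
Qed.

Lemma pow_diff (x y : R) n : 0 <= x -> x <= y -> y <= 1 -> y ^+ n - x ^+ n <= n%:R * (y - x).
Proof.
move=> x0 xy y1; elim: n => [|n IH]; first by rewrite !expr0 subrr mul0r.
have hxn : 0 <= x ^+ n by apply: exprn_ge0.
have hyn : y ^+ n <= 1 by apply: exprn_ile1 => //; apply: le_trans xy.
have hxy : x ^+ n <= y ^+ n by apply: lerXn2r => //; rewrite nnegrE // (le_trans x0 xy).
rewrite !exprS -natr1; nra.
Qed.

Lemma pow_cont (x dl : R) n : 0 <= x < 1 -> 0 < dl -> exists y, x < y /\ y ^+ n < x ^+ n + dl.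
Proof.
move=> /andP[x0 x1] d0.
pose e := Num.min ((1 - x) / 2) (dl / (n%:R + 1)).
have n0 : 0 < n%:R + 1 :> R by rewrite ltr_wpDl // ler0n.
have e0 : 0 < e by rewrite /e lt_min !divr_gt0 //; lra.
have e1 : e <= (1 - x) / 2 by rewrite /e ge_min lexx.
have e2 : e <= dl / (n%:R + 1) by rewrite /e ge_min lexx orbT.
exists (x + e); split; first by lra.
have := @pow_diff x (x + e) n x0 (ltW (ltr_pwDr e0 (lexx _))) ltac:(lra).
have : e * (n%:R + 1) <= dl by rewrite -ler_pdivlMr.
have : 0 <= n%:R :> R by rewrite ler0n.
rewrite addrAC subrr add0r; nra.
Qed.

Lemma eventually_big (r : R) : 1 < r -> exists K, forall n, (K <= n)%N -> 2 < r ^+ n.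
Proof.
move=> r1; pose K := (Num.truncn ((r - 1)^-1)).+1.
exists K => n hn.
have := @bernoulli (r - 1) n ltac:(lra); rewrite [1 + (r - 1)]addrC subrK => hb.
apply: lt_le_trans hb.
have hK : (r - 1)^-1 < K%:R by apply: truncnS_gt.
have hKn : K%:R <= n%:R :> R by rewrite ler_nat.
have rp : 0 < r - 1 by lra.
have : 1 < n%:R * (r - 1).
  by rewrite -ltr_pdivrMr // div1r; apply: lt_le_trans hK hKn.
lra.
Qed.

End Real.

Section P12.
Variable R : realType.
Variable Sigma : finType.

Lemma half_sq : (Num.sqrt (2^-1 : R)) ^+ 2 + (Num.sqrt (2^-1 : R)) ^+ 2 = 1.
Proof. by rewrite sqr_sqrtr ?invr_ge0 //; field. Qed.

Lemma part1 (L1 L2 : set (nat -> Sigma)) :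
  QBA_ND (0 : R) L1 -> QBA_ND (0 : R) L2 -> QBA_ND (0 : R) (L1 `|` L2).
Proof.
move=> [A1 ->] [A2 ->].
pose M1 := canonMA A1; pose M2 := canonMA A2.
exists (toQA (ma_sum half_sq M1 M2)).
rewrite -(langND_canon A1) -(langND_canon A2) -/M1 -/M2.
apply/seteqP; split => w.
- move=> hw; apply/(ma_char _ _ (lexx 0)).
  have [c [c0 hc]] : exists c : R, 0 < c /\ io (fun n => c <= qv M1 w n \/ c <= qv M2 w n).
    case: hw => /(ma_char _ _ (lexx 0)) [c [c0 hc]]; exists c; split => //;
      apply: io_mono hc => n h; by [left|right].
  exists (c / 2); split; first by lra.
  apply: io_mono hc => n; rewrite qv_sum sqr_sqrtr ?invr_ge0 //.
  have := qv_ge0 M1 w n; have := qv_ge0 M2 w n; move=> *; lra.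
- move/(ma_char _ _ (lexx 0)) => [c [c0 hc]].
  have : io (fun n => c <= qv M1 w n \/ c <= qv M2 w n).
    apply: io_mono hc => n; rewrite qv_sum sqr_sqrtr ?invr_ge0 // => h.
    case: (lerP c (qv M1 w n)) => h1; [by left | right; lra].
  case/io_or => h; [left | right]; apply/(ma_char _ _ (lexx 0)); by exists c.
Qed.

Lemma part2 (lam : R) : 0 < lam < 1 ->
   forall (L1 L2 : set (nat -> Sigma)),
     QBA_ND lam L1 -> QBA_ND lam L2 ->
     exists Ls : nat -> set (nat -> Sigma),
       (forall k, QBA_ND lam (Ls k)) /\ set_lim_is Ls (L1 `|` L2).
Proof.
move=> /andP[l0 l1] L1 L2 [A1 ->] [A2 ->].
have l0' : 0 <= lam by exact: ltW.
pose M1 := canonMA A1; pose M2 := canonMA A2.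
rewrite -(langND_canon A1) -(langND_canon A2) -/M1 -/M2.
pose gam k : R := (1 - lam) / (1 - lam ^+ k.+1).
have lpow : forall k, lam ^+ k.+1 <= lam.
  by move=> k; rewrite exprS ler_piMr // exprn_ile1 // ltW.
have lpow0 : forall k, 0 <= lam ^+ k.+1 by move=> k; apply: exprn_ge0.
have gpos : forall k, 0 < gam k.
  by move=> k; rewrite /gam divr_gt0 //; have := lpow k; lra.
have gle1 : forall k, gam k <= 1.
  move=> k; rewrite /gam ler_pdivrMr; first by rewrite mul1r; have := lpow k; lra.
  by have := lpow k; lra.
have gid : forall k, gam k * (1 - lam ^+ k.+1) = 1 - lam.
  move=> k; rewrite /gam -mulrA mulVf ?mulr1 //; apply: lt0r_neq0; have := lpow k; lra.
have hg : forall k, (Num.sqrt (gam k)) ^+ 2 + (Num.sqrt (1 - gam k)) ^+ 2 = 1.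
  move=> k; rewrite !sqr_sqrtr; [lra | | exact: ltW (gpos k)]; have := gle1 k; lra.
pose P k := ma_sum half_sq (ma_pow M1 k.+1) (ma_pow M2 k.+1).
pose B k := ma_sum (hg k) (P k) (ma_one R Sigma).
have qB : forall k w n, qv (B k) w n =
    gam k * (2^-1 * qv M1 w n ^+ k.+1 + 2^-1 * qv M2 w n ^+ k.+1) + (1 - gam k).
  move=> k w n; rewrite /B /P !qv_sum qv_one !qv_pow !sqr_sqrtr ?invr_ge0 //.
  - by rewrite mulr1.
  - by have := gle1 k; lra.
  - exact: ltW (gpos k).
pose Ls k := langND (toQA (B k)) lam.
have hii : forall k w, Ls k w -> (langND (toQA M1) lam `|` langND (toQA M2) lam) w.
  move=> k w /(ma_char _ _ l0') [c [hc hio]].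
  apply: contrapT => hn.
  have n1 : ~ langND (toQA M1) lam w by move=> h; apply: hn; left.
  have n2 : ~ langND (toQA M2) lam w by move=> h; apply: hn; right.
  pose dl := (c - lam) / gam k.
  have dl0 : 0 < dl by rewrite /dl divr_gt0 //; lra.
  have [y [hy1 hy2]] := @pow_cont R lam dl k.+1 (ltac:(apply/andP; split => //)) dl0.
  have [N1 hN1] : exists N, forall n, (N <= n)%N -> ~ (y <= qv M1 w n).
    apply: not_io => h; apply: n1; apply/(ma_char _ _ l0'); by exists y.
  have [N2 hN2] : exists N, forall n, (N <= n)%N -> ~ (y <= qv M2 w n).
    apply: not_io => h; apply: n2; apply/(ma_char _ _ l0'); by exists y.
  have [n [hnn hcn]] := hio (maxn N1 N2).
  have q1y : qv M1 w n < y.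
    by rewrite ltNge; apply/negP; apply: hN1; apply: leq_trans hnn; exact: leq_maxl.
  have q2y : qv M2 w n < y.
    by rewrite ltNge; apply/negP; apply: hN2; apply: leq_trans hnn; exact: leq_maxr.
  have e1 : qv M1 w n ^+ k.+1 <= y ^+ k.+1.
    by apply: lerXn2r; rewrite ?nnegrE; [exact: qv_ge0 | exact: (le_trans l0' (ltW hy1)) | exact: ltW].
  have e2 : qv M2 w n ^+ k.+1 <= y ^+ k.+1.
    by apply: lerXn2r; rewrite ?nnegrE; [exact: qv_ge0 | exact: (le_trans l0' (ltW hy1)) | exact: ltW].
  move: hcn; rewrite qB => hcn.
  have gd : gam k * dl = c - lam by rewrite /dl mulrC -mulrA mulVf ?mulr1 // gt_eqF.
  have := gid k; have := gpos k; move: hy2 e1 e2 hcn gd; clear; nra.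
have hi : forall (w : nat -> Sigma) (M : MA R Sigma) (qo : nat -> R),
    (forall n, 0 <= qo n) ->
    (forall k n, qv (B k) w n = gam k * (2^-1 * qv M w n ^+ k.+1 + 2^-1 * qo n ^+ k.+1) + (1 - gam k)) ->
    langND (toQA M) lam w -> exists K, forall k, (K <= k)%N -> Ls k w.
  move=> w M qo qo0 hq /(ma_char _ _ l0') [c1 [hc1 hio]].
  have r1 : 1 < c1 / lam by rewrite ltr_pdivlMr // mul1r.
  have [K hK] := eventually_big r1.
  exists K => k hk; apply/(ma_char _ _ l0').
  have hK' := hK k.+1 (leqW hk).
  rewrite expr_div_n ltr_pdivlMr ?exprn_gt0 // in hK'.
  exists (gam k * (2^-1 * c1 ^+ k.+1) + (1 - gam k)); split.
    have := gid k; have := gpos k; move: hK'; clear; nra.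
  apply: io_mono hio => n hn; rewrite hq.
  have e1 : c1 ^+ k.+1 <= qv M w n ^+ k.+1.
    by apply: lerXn2r; rewrite ?nnegrE; [exact: (le_trans l0' (ltW hc1)) | exact: qv_ge0 | exact: hn].
  have e2 : 0 <= qo n ^+ k.+1 by apply: exprn_ge0.
  have := gpos k; move: e1 e2; clear; nra.
have hU : forall w, (langND (toQA M1) lam `|` langND (toQA M2) lam) w ->
    exists K, forall k, (K <= k)%N -> Ls k w.
  move=> w [h|h].
    by apply: (hi w M1 (fun n => qv M2 w n)) => // n; apply: qv_ge0.
  apply: (hi w M2 (fun n => qv M1 w n)) => //; first by move=> n; apply: qv_ge0.
  by move=> k n; rewrite qB [2^-1 * _ + _]addrC.
exists Ls; split; first by move=> k; exists (toQA (B k)).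
split; apply/seteqP; split => w /=.
- by move=> [k hk]; apply: (hii k); apply: hk.
- by move=> /hU [K hK]; exists K.
- by move=> h; have [j [_ hj]] := h 0%N; exact: (hii j).
- move=> /hU [K hK] k; exists (maxn k K); split; first exact: leq_maxl.
  by apply: hK; exact: leq_maxr.
Qed.

End P12.


Theorem theorem10 (R : realType) :
  (* (1) *)
  (forall (Sigma : finType) (L1 L2 : set (nat -> Sigma)),
     QBA_ND (0 : R) L1 -> QBA_ND (0 : R) L2 -> QBA_ND (0 : R) (L1 `|` L2)) /\
  (* (2) *)
  (forall lambda : R, 0 < lambda < 1 ->
   forall (Sigma : finType) (L1 L2 : set (nat -> Sigma)),
     QBA_ND lambda L1 -> QBA_ND lambda L2 ->
     exists Ls : nat -> set (nat -> Sigma),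
       (forall k, QBA_ND lambda (Ls k)) /\ set_lim_is Ls (L1 `|` L2)) /\
  (* (3) *)
  (forall lambda : R, 0 < lambda < 1 ->
   exists (Sigma : finType) (Ls : nat -> set (nat -> Sigma)) (L : set (nat -> Sigma)),
     (forall k, QBA_ND lambda (Ls k)) /\ set_lim_is Ls L /\ ~ QBA_ND lambda L) /\
  (* (4) *)
  (forall lambda : R, 0 <= lambda < 1 ->
   exists (Sigma : finType) (L : set (nat -> Sigma)),
     QBA_ND lambda L /\ ~ QBA_ND lambda (~` L)) /\
  (* (5) *)
  (forall lambda : R, 0 <= lambda < 1 ->
   exists (Sigma : finType) (L1 L2 : set (nat -> Sigma)),
     QBA_ND lambda L1 /\ QBA_ND lambda L2 /\ ~ QBA_ND lambda (L1 `&` L2)).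
Proof.
split; first by move=> Sigma L1 L2; apply: part1.
split; first by move=> lam hl Sigma; apply: part2.
split.
  move=> lam /andP[l0 l1]; apply: part3; rewrite l1 andbT; exact: ltW.
split; first by move=> lam hl; apply: part4.
by move=> lam hl; apply: part5.
Qed.
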